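(* Consider a Boolean control network $\mathbf{x}(t+1)=L\ltimes\mathbf{u}(t)\ltimes\mathbf{x}(t)$, $\mathbf{y}(t)=H\mathbf{x}(t)$, with $L\in\mathcal{L}_{N\times NM}$, $H\in\mathcal{L}_{P\times N}$, a periodic reference output trajectory of minimal period $T\ge1$, $\mathbf{y}_r(s+kT)=\delta_P^{i_s}$ ($s\in[1,T]$, $k\in\mathbb{Z}_+$), and an initial state $\mathbf{x}_0\in\mathcal{L}_N$. Let $\mathbf{v}(t)=H^\top\mathbf{y}_r(t)$ for $t\in[1,T+1]$ (so $\mathbf{v}(T+1)=\mathbf{v}(1)$), $L_{tot}=L_1\vee\cdots\vee L_M$, and $\boldsymbol{\alpha}(1)=\mathbf{v}(1)$, $\boldsymbol{\alpha}(t)=\mathbf{v}(t)\odot(L_{tot}\boldsymbol{\alpha}(t-1))$ for $t\in[2,T+1]$. Define $\boldsymbol{\beta}_1(T+1)=\boldsymbol{\alpha}(T+1)$, $\boldsymbol{\beta}_1(t)=\boldsymbol{\alpha}(t)\odot(L_{tot}^\top\boldsymbol{\beta}_1(t+1))$ for $t=T,\dots,1$, and for $k\ge2$: $\boldsymbol{\beta}_k(T+1)=\boldsymbol{\beta}_{k-1}(T+1)\odot\boldsymbol{\beta}_{k-1}(1)$, $\boldsymbol{\beta}_k(t)=\boldsymbol{\beta}_{k-1}(t)\odot(L_{tot}^\top\boldsymbol{\beta}_k(t+1))$ for $t=T,\dots,1$. Let $\mathcal{X}_t^{(k)}=\{\delta_N^j:[\boldsymbol{\beta}_k(t)]_j\neq0\}$,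 and let $k^*$ be the smallest $k\ge1$ such that $\mathcal{X}_{T+1}^{(k)}\subseteq\mathcal{X}_1^{(k)}$ or $\mathcal{X}_1^{(k)}=\emptyset$. Then the periodic reference output trajectory is trackable from $\mathbf{x}_0$ (i.e. there exists $\{\mathbf{u}(t)\}_{t\in\mathbb{Z}_+}\subset\mathcal{L}_M$ such that the state trajectory with $\mathbf{x}(0)=\mathbf{x}_0$ satisfies $H\mathbf{x}(t)=\mathbf{y}_r(t)$ for all $t\ge1$) if and only if: (i) $\mathcal{X}_1^{(k^* )}\neq\emptyset$ and $\mathcal{X}_{T+1}^{(k^* )}\subseteq\mathcal{X}_1^{(k^* )}$; and (ii) there exists $\mathbf{u}\in\mathcal{L}_M$ such that $L\ltimes\mathbf{u}\ltimes\mathbf{x}_0\in\mathcal{X}_1^{(k^* )}$.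
   Context: $\delta_k^i$ is the $i$-th canonical vector of $\mathbb{R}^k$; $\mathcal{L}_k$ is the set of canonical vectors of $\mathbb{R}^k$; $\mathcal{L}_{k\times q}$ the set of $k\times q$ matrices whose columns lie in $\mathcal{L}_k$. $N=2^n$, $M=2^m$, $P=2^p$. $L=[L_1|\cdots|L_M]$ with $L_i\in\mathcal{L}_{N\times N}$, and $L\ltimes\delta_M^i\ltimes\mathbf{x}=L_i\mathbf{x}$. $\vee$ is entrywise Boolean OR, $\odot$ is the entrywise (Hadamard) product, matrix–vector products are ordinary (only the zero/nonzero pattern of the vectors matters), and $[\mathbf{w}]_j$ is the $j$-th entry of $\mathbf{w}$. *)

(* Defs.v *)
From mathcomp Require Import all_boot all_algebra.
Set Implicit Arguments. Unset Strict Implicit. Unset Printing Implicit Defensive.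
Import GRing.Theory.
Local Open Scope ring_scope.

(* Conventions: N = 2^n, M = 2^m, P = 2^p.  The canonical vector delta_k^i is
   represented by its index i : 'I_k (0-based).  The logical matrix
   L = [L_1 | ... | L_M] in L_{N x NM} is given by its columns:
   L k j = index of the column j of the block L_k, i.e. L_k delta_N^j = delta_N^(L k j),
   so that L |x delta_M^k |x delta_N^j = delta_N^(L k j).
   Likewise H in L_{P x N} is given by H j = index of its j-th column.
   All vectors alpha, beta, v are nat column vectors; products are ordinary. *)

Section BCN.
Variables (n m p : nat).
Variable L : 'I_(2^m) -> 'I_(2^n) -> 'I_(2^n).
Variable H : 'I_(2^n) -> 'I_(2^p).
Variable T : nat.
Variable yr : nat -> 'I_(2^p).   (* y_r(t) = delta_P^(yr t), for t >= 1 *)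

Definition delta k (j : 'I_k) : 'cV[nat]_k := \col_i ((i == j) : nat).

Definition Lmat (k : 'I_(2^m)) : 'M[nat]_(2^n) := \matrix_(i, j) ((i == L k j) : nat).
Definition Hmat : 'M[nat]_(2^p, 2^n) := \matrix_(i, j) ((i == H j) : nat).

Definition bormx a b (A B : 'M[nat]_(a, b)) : 'M[nat]_(a, b) :=
  \matrix_(i, j) (((A i j != 0%N) || (B i j != 0%N)) : nat).
Definition hadamard a b (A B : 'M[nat]_(a, b)) : 'M[nat]_(a, b) :=
  \matrix_(i, j) (A i j * B i j)%N.

Definition Ltot : 'M[nat]_(2^n) := \big[@bormx _ _/0]_(k < 2^m) Lmat k.

Definition vvec (t : nat) : 'cV[nat]_(2^n) := (Hmat^T) *m delta (yr t).

Fixpoint alpha_aux (d : nat) : 'cV[nat]_(2^n) :=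
  match d with
  | 0 => vvec 1
  | d'.+1 => hadamard (vvec d.+1) (Ltot *m alpha_aux d')
  end.
Definition alpha (t : nat) := alpha_aux t.-1.

(* backward recursion: bw prev top d = beta(T+1-d), with beta(T+1) = top and
   beta(t) = prev(t) (.) (Ltot^T beta(t+1)) *)
Fixpoint bw (prev : nat -> 'cV[nat]_(2^n)) (top : 'cV[nat]_(2^n)) (d : nat)
  : 'cV[nat]_(2^n) :=
  match d with
  | 0 => top
  | d'.+1 => hadamard (prev (T.+1 - d)%N) (Ltot^T *m bw prev top d')
  end.
Definition bwfun prev top (t : nat) := bw prev top (T.+1 - t).

Fixpoint beta_aux (k : nat) : nat -> 'cV[nat]_(2^n) :=
  match k with
  | 0 => bwfun alpha (alpha T.+1)
  | k'.+1 => let b := beta_aux k' in bwfun b (hadamard (b T.+1) (b 1%N))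
  end.
(* beta k t = beta_k(t), for k >= 1, t in [1, T+1] *)
Definition beta (k : nat) := beta_aux k.-1.

Definition Xset (k t : nat) : {set 'I_(2^n)} := [set j | beta k t j 0 != 0%N].

Definition kcond (k : nat) : Prop :=
  Xset k T.+1 \subset Xset k 1 \/ Xset k 1 = set0.

Fixpoint traj (u : nat -> 'I_(2^m)) (x0 : 'I_(2^n)) (t : nat) : 'I_(2^n) :=
  match t with
  | 0 => x0
  | t'.+1 => L (u t') (traj u x0 t')
  end.

Definition trackable (x0 : 'I_(2^n)) : Prop :=
  exists u : nat -> 'I_(2^m),
    forall t, (1 <= t)%N -> Hmat *m delta (traj u x0 t) = delta (yr t).

End BCN.

Definition periodic_from1 (A : Type) (y : nat -> A) (T : nat) : Prop :=
  forall t, (1 <= t)%N -> y (t + T)%N = y t.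

(* Main.v *)
Require Import Defs.
From mathcomp Require Import all_boot all_algebra.
From mathcomp Require Import zify.
Set Implicit Arguments. Unset Strict Implicit. Unset Printing Implicit Defensive.
Import GRing.Theory.
Local Open Scope ring_scope.

Lemma nat_sum_nz (I : finType) (F : I -> nat) :
  ((\sum_(i : I) F i)%R != 0%N) = [exists i, F i != 0%N].
Proof.
rewrite -negb_forall; congr negb; apply: sum_nat_eq0.
Qed.

Lemma mul_nz a b c (A : 'M[nat]_(a, b)) (B : 'M[nat]_(b, c)) i j :
  ((A *m B) i j != 0%N) = [exists k, (A i k != 0%N) && (B k j != 0%N)].
Proof.
rewrite mxE nat_sum_nz; apply: eq_existsb => k.
by rewrite -negb_or -muln_eq0.
Qed.

Lemma had_nz a b (A B : 'M[nat]_(a, b)) i j :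
  (hadamard A B i j != 0%N) = (A i j != 0%N) && (B i j != 0%N).
Proof. by rewrite mxE muln_eq0 negb_or. Qed.

Lemma bor_nz a b (I : Type) (r : seq I) (F : I -> 'M[nat]_(a, b)) i j :
  ((\big[@bormx a b/0%R]_(k <- r) F k) i j != 0%N) = has (fun k => F k i j != 0%N) r.
Proof.
elim: r => [|x r IH]; first by rewrite big_nil mxE.
by rewrite big_cons mxE /= IH; case: (_ != 0%N); case: has.
Qed.
Lemma delta_nz k (j i : 'I_k) : (delta j i 0 != 0%N) = (i == j).
Proof. by rewrite mxE; case: (i == j). Qed.

Lemma Hdelta {n p : nat} (H : 'I_(2^n) -> 'I_(2^p)) x i :
  (Hmat H *m delta x) i 0 = (i == H x) :> nat.
Proof.
rewrite mxE (bigD1 x) //= big1 ?addr0.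
  by rewrite !mxE eqxx mulr1.
by move=> j /negbTE Hj; rewrite !mxE Hj mulr0.
Qed.

Lemma Hdelta_eq {n p : nat} (H : 'I_(2^n) -> 'I_(2^p)) x y :
  (Hmat H *m delta x = delta y) <-> H x = y.
Proof.
split.
- move/matrixP => /(_ (H x) 0); rewrite Hdelta mxE eqxx.
  by case: eqP.
- move=> <-; apply/matrixP => i j; rewrite ord1 Hdelta mxE //.
Qed.

Lemma vvec_nz {n p : nat} (H : 'I_(2^n) -> 'I_(2^p)) yr t j :
  (vvec H yr t j 0 != 0%N) = (H j == yr t).
Proof.
rewrite mul_nz; apply/existsP/idP.
- case=> i; rewrite !mxE; case: (eqVneq i (H j)) => [<-|] //=; by case: (i == yr t).
- move/eqP=> Hj; exists (yr t); rewrite !mxE Hj eqxx //.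
Qed.

Lemma Ltot_nz {n m : nat} (L : 'I_(2^m) -> 'I_(2^n) -> 'I_(2^n)) i j :
  (Ltot L i j != 0%N) = [exists k, L k j == i].
Proof.
rewrite /Ltot bor_nz; apply/hasP/existsP.
- by case=> k _; rewrite mxE; case: (eqVneq i (L k j)) => [->|] //; exists k.
- by case=> k /eqP <-; exists k; rewrite ?mem_index_enum // mxE eqxx.
Qed.

Lemma succ_nz {n m : nat} (L : 'I_(2^m) -> 'I_(2^n) -> 'I_(2^n)) (a : 'cV[nat]_(2^n)) i :
  ((Ltot L *m a) i 0 != 0%N) = [exists j, [exists k, L k j == i] && (a j 0 != 0%N)].
Proof. by rewrite mul_nz; apply: eq_existsb => j; rewrite Ltot_nz. Qed.

Lemma pre_nz {n m : nat} (L : 'I_(2^m) -> 'I_(2^n) -> 'I_(2^n)) (b : 'cV[nat]_(2^n)) j :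
  (((Ltot L)^T *m b) j 0 != 0%N) = [exists k, b (L k j) 0 != 0%N].
Proof.
rewrite mul_nz; apply/existsP/existsP.
- by case=> i; rewrite mxE Ltot_nz => /andP[/existsP[k /eqP <-] Hb]; exists k.
- case=> k Hk; exists (L k j); rewrite mxE Ltot_nz Hk andbT.
  by apply/existsP; exists k.
Qed.


Lemma bwfun_top {n m : nat} (L : 'I_(2^m) -> 'I_(2^n) -> 'I_(2^n)) T prev top :
  bwfun L T prev top T.+1 = top.
Proof. by rewrite /bwfun subnn. Qed.

Lemma bwfun_step {n m : nat} (L : 'I_(2^m) -> 'I_(2^n) -> 'I_(2^n)) T prev top t :
  (t <= T)%N ->
  bwfun L T prev top t = hadamard (prev t) ((Ltot L)^T *m bwfun L T prev top t.+1).
Proof.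
move=> Ht; rewrite /bwfun subSn //= subSS subKn //.
Qed.

Lemma alpha_v {n m p : nat} (L : 'I_(2^m) -> 'I_(2^n) -> 'I_(2^n)) (H : 'I_(2^n) -> 'I_(2^p)) yr t j :
  (1 <= t)%N -> alpha L H yr t j 0 != 0%N -> H j == yr t.
Proof.
case: t => // t _; rewrite /alpha /=; case: t => [|t] /=; first by rewrite vvec_nz.
by rewrite had_nz vvec_nz => /andP[].
Qed.

Lemma beta_v {n m p : nat} (L : 'I_(2^m) -> 'I_(2^n) -> 'I_(2^n)) (H : 'I_(2^n) -> 'I_(2^p)) T yr k t j :
  (1 <= t <= T.+1)%N -> beta_aux L H T yr k t j 0 != 0%N -> H j == yr t.
Proof.
move=> /andP[t1 tT]; elim: k => [|k IH] /=.
- case: (ltnP t T.+1) => Ht.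
  + rewrite bwfun_step // had_nz => /andP[+ _]; exact: alpha_v.
  + have -> : t = T.+1 by apply/eqP; rewrite eqn_leq tT Ht.
    rewrite bwfun_top; exact: alpha_v.
- case: (ltnP t T.+1) => Ht.
  + rewrite bwfun_step // had_nz => /andP[+ _]; exact: IH.
  + have Et : t = T.+1 by apply/eqP; rewrite eqn_leq tT Ht.
    rewrite Et bwfun_top had_nz => /andP[+ _]; rewrite -Et; exact: IH.
Qed.

Lemma beta_pre {n m p : nat} (L : 'I_(2^m) -> 'I_(2^n) -> 'I_(2^n)) (H : 'I_(2^n) -> 'I_(2^p)) T yr k t j :
  (t <= T)%N -> beta_aux L H T yr k t j 0 != 0%N ->
  exists kk, beta_aux L H T yr k t.+1 (L kk j) 0 != 0%N.
Proof.
move=> Ht; case: k => [|k] /=; rewrite bwfun_step // had_nz pre_nz => /andP[_ /existsP] //.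
Qed.

Lemma beta_top {n m p : nat} (L : 'I_(2^m) -> 'I_(2^n) -> 'I_(2^n)) (H : 'I_(2^n) -> 'I_(2^p)) T yr k j :
  (beta_aux L H T yr k.+1 T.+1 j 0 != 0%N) =
  (beta_aux L H T yr k T.+1 j 0 != 0%N) && (beta_aux L H T yr k 1 j 0 != 0%N).
Proof. by rewrite /= bwfun_top had_nz. Qed.

Lemma beta_mono {n m p : nat} (L : 'I_(2^m) -> 'I_(2^n) -> 'I_(2^n)) (H : 'I_(2^n) -> 'I_(2^p)) T yr k t j :
  (t <= T.+1)%N -> beta_aux L H T yr k.+1 t j 0 != 0%N -> beta_aux L H T yr k t j 0 != 0%N.
Proof.
move=> tT; case: (ltnP t T.+1) => Ht.
- by rewrite /= bwfun_step // had_nz => /andP[].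
- have -> : t = T.+1 by apply/eqP; rewrite eqn_leq tT Ht.
  by rewrite beta_top => /andP[].
Qed.

Lemma bw_mem {n m : nat} (L : 'I_(2^m) -> 'I_(2^n) -> 'I_(2^n)) T (prev : nat -> 'cV[nat]_(2^n)) (top : 'cV[nat]_(2^n)) (y : nat -> 'I_(2^n)) :
  (forall t, (1 <= t <= T)%N -> exists k, y t.+1 = L k (y t)) ->
  top (y T.+1) 0 != 0%N ->
  (forall t, (1 <= t <= T)%N -> prev t (y t) 0 != 0%N) ->
  forall t, (1 <= t <= T.+1)%N -> bwfun L T prev top t (y t) 0 != 0%N.
Proof.
move=> Hy Htop Hprev.
suff: forall d t, (T.+1 - t)%N = d -> (1 <= t <= T.+1)%N -> bwfun L T prev top t (y t) 0 != 0%N.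
  by move=> S t; apply: S.
elim=> [|d IH] t Hd /andP[t1 tT].
- have -> : t = T.+1 by apply/eqP; rewrite eqn_leq tT /= -subn_eq0 Hd.
  by rewrite bwfun_top.
- have HtT : (t <= T)%N by rewrite -ltnS ltn_neqAle tT andbT; apply/eqP => E; rewrite E subnn in Hd.
  rewrite bwfun_step // had_nz Hprev ?t1 //= pre_nz; apply/existsP.
  have [k Ek] := Hy t (introT andP (conj t1 HtT)).
  exists k; rewrite -Ek; apply: IH; last by lia.
  by rewrite subSS; move: Hd; rewrite subSn // => -[].
Qed.

Lemma yr_per {p : nat} (yr : nat -> 'I_(2^p)) T :
  periodic_from1 yr T -> forall q t, (1 <= t)%N -> yr (q * T + t)%N = yr t.
Proof.
move=> Hp; elim=> [|q IH] t t1; first by rewrite mul0n add0n.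
rewrite mulSn -addnA addnC Hp ?IH //; lia.
Qed.

Fixpoint phs (T d : nat) : nat :=
  match d with 0 => 1%N | d'.+1 => if phs T d' == T then 1%N else (phs T d').+1 end.

Lemma phs_prop T : (1 <= T)%N -> forall d, (1 <= phs T d <= T)%N /\ exists q, d.+1 = (q * T + phs T d)%N.
Proof.
move=> T1; elim=> [|d [Hb [q Hq]]] /=; first by split; [lia| exists 0%N].
case: eqP => E.
- split; first lia. exists q.+1; rewrite mulSn; lia.
- split; first lia. exists q; lia.
Qed.

Definition pickc {n m : nat} (L : 'I_(2^m) -> 'I_(2^n) -> 'I_(2^n)) (b : nat -> 'cV[nat]_(2^n)) u0 s x :=
  odflt u0 [pick kk | b s.+1 (L kk x) 0 != 0%N].

Fixpoint xs {n m : nat} (L : 'I_(2^m) -> 'I_(2^n) -> 'I_(2^n)) (b : nat -> 'cV[nat]_(2^n)) u0 x0 T d :=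
  match d with
  | 0 => L u0 x0
  | d'.+1 => L (pickc L b u0 (phs T d') (xs L b u0 x0 T d')) (xs L b u0 x0 T d')
  end.

Definition uctl {n m : nat} (L : 'I_(2^m) -> 'I_(2^n) -> 'I_(2^n)) (b : nat -> 'cV[nat]_(2^n)) u0 x0 T t :=
  match t with
  | 0 => u0
  | t'.+1 => pickc L b u0 (phs T t') (xs L b u0 x0 T t')
  end.

Lemma traj_xs {n m : nat} (L : 'I_(2^m) -> 'I_(2^n) -> 'I_(2^n)) b u0 x0 T d :
  traj L (uctl L b u0 x0 T) x0 d.+1 = xs L b u0 x0 T d.
Proof.
elim: d => [|d IH] //.
change (L (uctl L b u0 x0 T d.+1) (traj L (uctl L b u0 x0 T) x0 d.+1) = xs L b u0 x0 T d.+1).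
by rewrite IH.
Qed.

Lemma xs_inv {n m : nat} (L : 'I_(2^m) -> 'I_(2^n) -> 'I_(2^n)) (b : nat -> 'cV[nat]_(2^n)) u0 x0 T :
  (1 <= T)%N ->
  (forall s x, (1 <= s <= T)%N -> b s x 0 != 0%N -> exists kk, b s.+1 (L kk x) 0 != 0%N) ->
  (forall x, b T.+1 x 0 != 0%N -> b 1%N x 0 != 0%N) ->
  b 1%N (L u0 x0) 0 != 0%N ->
  forall d, b (phs T d) (xs L b u0 x0 T d) 0 != 0%N.
Proof.
move=> T1 Hstep Htop H0; elim=> [|d IH] //=.
have [Hb _] := phs_prop T1 d.
rewrite /pickc; case: pickP => [kk Hkk | Hn] /=.
- case: ifP => /eqP E; last exact: Hkk.
  by apply: Htop; rewrite E in Hkk.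
- have [kk Hkk] := Hstep _ _ Hb IH; by rewrite Hn in Hkk.
Qed.

Theorem theorem2 (n m p : nat)
  (L : 'I_(2^m) -> 'I_(2^n) -> 'I_(2^n)) (H : 'I_(2^n) -> 'I_(2^p))
  (T : nat) (yr : nat -> 'I_(2^p)) (x0 : 'I_(2^n)) :
  (1 <= T)%N ->
  periodic_from1 yr T ->
  (forall T', (1 <= T')%N -> (T' < T)%N -> ~ periodic_from1 yr T') ->
  (exists k, (1 <= k)%N /\ kcond L H T yr k) /\
  (forall kstar, (1 <= kstar)%N -> kcond L H T yr kstar ->
     (forall k, (1 <= k)%N -> (k < kstar)%N -> ~ kcond L H T yr k) ->
     (trackable L H yr x0 <->
        (Xset L H T yr kstar 1 != set0 /\
         Xset L H T yr kstar T.+1 \subset Xset L H T yr kstar 1) /\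
        (exists u : 'I_(2^m), L u x0 \in Xset L H T yr kstar 1))).
Proof.
move=> T1 Hper _; split.
- suff: forall k, (exists k', (1 <= k')%N /\ kcond L H T yr k') \/
                  (#|Xset L H T yr k.+1 T.+1| + k <= 2^n)%N.
    move=> /(_ (2^n).+1) [] // Hc; exfalso; move: Hc; lia.
  elim=> [|k [IH|IH]]; [right | by left |].
  + by rewrite addn0 -[X in (_ <= X)%N]card_ord max_card.
  + case: (boolP (Xset L H T yr k.+1 T.+1 \subset Xset L H T yr k.+1 1)) => Hs.
    * by left; exists k.+1; split => //; left.
    * right.
      have E : Xset L H T yr k.+2 T.+1 = Xset L H T yr k.+1 T.+1 :&: Xset L H T yr k.+1 1.
        by apply/setP => j; rewrite !inE [LHS]beta_top.
      have := proper_card (properIl Hs); rewrite -E; lia.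
- case=> // k _ Hks _.
  split.
  + case=> u Hu.
    pose x := traj L u x0.
    have HX : forall t, (1 <= t)%N -> H (x t) = yr t by move=> t t1; apply/Hdelta_eq; exact: Hu.
    have Hstep : forall q t, exists kk, x (q * T + t.+1)%N = L kk (x (q * T + t)%N).
      by move=> q t; exists (u (q * T + t)%N); rewrite addnS.
    have Ha : forall q t, (1 <= t <= T.+1)%N -> alpha L H yr t (x (q * T + t)%N) 0 != 0%N.
      move=> q; elim=> [|t IH] // /andP[_ tT].
      case: t IH tT => [|t] IH tT.
      * by rewrite /alpha /= vvec_nz HX ?(yr_per Hper) //; lia.
      * rewrite /alpha /= had_nz vvec_nz HX ?(yr_per Hper) //; last by lia.
        rewrite eqxx /= succ_nz; apply/existsP; exists (x (q * T + t.+1)%N).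
        rewrite IH; last by lia.
        by rewrite andbT; apply/existsP; exists (u (q * T + t.+1)%N); apply/eqP; rewrite [(q * T + t.+2)%N]addnS.
    have Inv : forall k q t, (1 <= t <= T.+1)%N -> beta_aux L H T yr k t (x (q * T + t)%N) 0 != 0%N.
      elim=> [|k' IH] q /=.
      * apply: (bw_mem (y := fun t => x (q * T + t)%N)).
        - by move=> t _; apply: Hstep.
        - by apply: Ha; lia.
        - by move=> t /andP[t1 tT]; apply: Ha; lia.
      * apply: (bw_mem (y := fun t => x (q * T + t)%N)).
        - by move=> t _; apply: Hstep.
        - rewrite had_nz IH //=.
          have -> : (q * T + T.+1 = q.+1 * T + 1)%N by rewrite mulSn; lia.
          by apply: IH.
        - by move=> t /andP[t1 tT]; apply: IH; lia.
    have Hx1 : beta_aux L H T yr k 1 (x 1%N) 0 != 0%N.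
      by have := Inv k 0%N 1%N; rewrite mul0n add0n; apply.
    have Hin : x 1%N \in Xset L H T yr k.+1 1 by rewrite inE.
    split; last by exists (u 0%N).
    split; first by apply/set0Pn; exists (x 1%N).
    case: Hks => // E; by rewrite E inE in Hin.
  + move=> [[_ Hsub] [u0 Hu0]].
    pose b := beta_aux L H T yr k.
    exists (uctl L b u0 x0 T).
    case=> // d _; rewrite traj_xs; apply/Hdelta_eq.
    have Hi := xs_inv (b := b) (u0 := u0) (x0 := x0) (L := L) T1.
    have [Hb [q Hq]] := phs_prop T1 d.
    have Hm := Hi _ _ _ d.
    rewrite Hq (yr_per Hper); last by lia.
    apply/eqP; apply: (beta_v (k := k) (T := T)); last apply: Hm.
    * lia.
    * move=> s x /andP[s1 sT]; exact: beta_pre.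
    * by move=> x Hx; move/subsetP: Hsub => /(_ x); rewrite !inE; apply.
    * by move: Hu0; rewrite inE.
Qed.
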